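(* Let $X$ be a finite set, $G\le S_X$, $f\in N_{S_X}(G)$ and $\Gamma=\Gamma_r(G,f)$. Let $\bar f$ be the permutation of the set of $G$-orbits induced by $f$ (mapping $wG$ to $(wf)G$). Then: (i) $\Gamma$ is an $|X/G|$-partite digraph with parts $\{C_G(G_x):x\in X/G\}$; (ii) for $x,z\in X/G$, there exists an edge from $C_G(G_z)$ to $C_G(G_x)$ if and only if $\bar f$ maps $zG$ to $xG$; (iii) the digraph on $X/G$ obtained from $\Gamma$ by collapsing every vertex set $C_G(G_x)$ into a single vertex is a disjoint union of directed cycles, namely the cycle decomposition of $\bar f$; (iv) every vertex of $\Gamma$ has indegree $1$ and outdegree $1$, so $\Gamma$ is a union of disjoint directed cycles.
   Context: Permutations act on the right ($xf$ is the image of $x$ under $f$; $fg$ means $f$ first, then $g$); $g^f=f^{-1}gf$. For $G\le S_X$, $xG$ is the orbit of $x$, $G_x$ its stabilizer, $X/G$ a fixed complete set of orbit representatives; $C_G(H)$ is the centralizer and $N_{S_X}(G)$ the normalizer. For every $y\in X$ fix $g_y\in G$ with $xg_y=y$, where $x$ is the representative in $X/G$ of the orbit of $y$. The digraph (possibly with loops) $\Gamma_r(G,f)$, for $f\in N_{S_X}(G)$, has vertex set the formally disjoint union of the sets $C_G(G_x)$, $x\in X/G$; for $x,z\in X/G$, $\kappa_x\in C_G(G_x)$ and $\lambda_z\in C_G(G_z)$, there is a directed edge $\lambda_z\to\kappa_x$ if and only if, with $y=xf^{-1}$, we have $z=yg_y^{-1}$ and $\kappa_x=((\lambda_z)^{g_y})^f$.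 *)

(* Defs.v *)
(* Permutations of a finite set X are {perm X}; mathcomp's
   product p * q applies p first, then q, and x ^ y = y^-1 * x * y, matching
   the paper's right-action conventions. *)
From mathcomp Require Import all_boot all_fingroup.
Set Implicit Arguments. Unset Strict Implicit. Unset Printing Implicit Defensive.

Local Open Scope group_scope.

Section Gamma.
Variables (X : finType) (G : {group {perm X}}) (f : {perm X})
          (R : {set X}) (g : X -> {perm X}).

Definition orbit_transversal_of : Prop :=
  forall y : X, #|R :&: orbit 'P G y| = 1%N.

Definition orbit_movers : Prop :=
  forall y : X, g y \in G /\
    (forall x, x \in R -> x \in orbit 'P G y -> g y x = y).

(* Vertices of Gamma_r(G,f): the formally disjoint union of the C_G(G_x),
   x in R, encoded as pairs (x, kappa). *)
Definition Gvert : {set X * {perm X}} :=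
  [set v | (v.1 \in R) && (v.2 \in 'C_G('C_G[v.1 | 'P]))].

Definition Gedge (v w : X * {perm X}) : bool :=
  let y := (f^-1) w.1 in
  [&& v \in Gvert, w \in Gvert,
      v.1 == (g y)^-1 y & w.2 == (v.2 ^ g y) ^ f].

Definition Gpart (x : X) : {set X * {perm X}} :=
  [set v in Gvert | v.1 == x].

Definition Gcollapsed (z x : X) : Prop :=
  exists v w, [/\ v \in Gpart z, w \in Gpart x & Gedge v w].

End Gamma.

(* Main.v *)
Require Import Defs.
From mathcomp Require Import all_boot all_fingroup.
Set Implicit Arguments. Unset Strict Implicit. Unset Printing Implicit Defensive.
Local Open Scope group_scope.

Lemma orbf_aux (X : finType) (G : {group {perm X}}) (f : {perm X}) a b :
  f \in 'N(G) -> a \in orbit 'P G b -> f a \in orbit 'P G (f b).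
Proof.
move=> fN /orbitP [h hG <-]; apply/orbitP; exists (h ^ f); first by rewrite memJ_norm.
by rewrite /= !apermE /conjg !permM permK.
Qed.

Lemma orbf (X : finType) (G : {group {perm X}}) (f : {perm X}) a b :
  f \in 'N(G) -> (f a \in orbit 'P G (f b)) = (a \in orbit 'P G b).
Proof.
move=> fN; apply/idP/idP; last exact: orbf_aux.
have fN' : f^-1 \in 'N(G) by rewrite groupV.
by move/(orbf_aux fN'); rewrite !permK.
Qed.

Lemma rep_spec (X : finType) (G : {group {perm X}}) (R : {set X}) (g : X -> {perm X}) y :
  orbit_transversal_of G R -> orbit_movers G R g ->
  [/\ (g y)^-1 y \in R, (g y)^-1 y \in orbit 'P G y &
      forall x, x \in R -> x \in orbit 'P G y -> x = (g y)^-1 y].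
Proof.
move=> tr mv; have [gG gE] := mv y.
have uq : forall x, x \in R -> x \in orbit 'P G y -> x = (g y)^-1 y.
  by move=> x xR xo; apply: (@perm_inj _ (g y)); rewrite permKV gE.
have [x0 Hx0] := cards1P (introT eqP (tr y)).
have : x0 \in R :&: orbit 'P G y by rewrite Hx0 set11.
rewrite inE => /andP [x0R x0o].
rewrite -(uq x0 x0R x0o); split => // x xR xo; rewrite (uq x0 x0R x0o); exact: uq.
Qed.

Lemma centC (X : finType) (G : {group {perm X}}) (b k : {perm X}) z :
  b \in 'N(G) -> k \in 'C_G('C_G[z | 'P]) -> k ^ b \in 'C_G('C_G[b z | 'P]).
Proof.
move=> bN kC.
have E : 'C_G[b z | 'P] = 'C_G[z | 'P] :^ b.
  by rewrite conjIg (normP bN) -astab1_act.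
by rewrite E inE centJ memJ_conjg memJ_norm // -in_setI.
Qed.

Theorem proposition5p1 (X : finType) (G : {group {perm X}}) (f : {perm X})
    (R : {set X}) (g : X -> {perm X}) :
  f \in 'N(G) ->
  orbit_transversal_of G R ->
  orbit_movers G R g ->
  [/\
   (* (i) *)
   [/\ partition [set Gpart G R x | x in R] (Gvert G R),
       #|[set Gpart G R x | x in R]| = #|R|,
       #|R| = #|[set orbit 'P G y | y : X]| &
       forall x, x \in R -> Gpart G R x = [set (x, k) | k in 'C_G('C_G[x | 'P])]],
   (* (ii) *)
   (forall x z, x \in R -> z \in R ->
      Gcollapsed G f R g z x <-> orbit 'P G (f z) = orbit 'P G x),
   (* (iii) *)
   (exists p : {perm X}, [/\ perm_on R p,
      (forall z, z \in R -> orbit 'P G (p z) = orbit 'P G (f z)) &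
      (forall z x, z \in R -> x \in R -> Gcollapsed G f R g z x <-> p z = x)]) &
   (* (iv) *)
   [/\ (forall v, v \in Gvert G R ->
          #|[set w | Gedge G f R g w v]| = 1%N /\
          #|[set w | Gedge G f R g v w]| = 1%N) &
       exists q : {perm X * {perm X}}, perm_on (Gvert G R) q /\
          (forall v w, Gedge G f R g v w <-> (v \in Gvert G R /\ q v = w))]].
Proof.
move=> fN tr mv.
have repR y : (g y)^-1 y \in R by case: (rep_spec y tr mv).
have repO y : (g y)^-1 y \in orbit 'P G y by case: (rep_spec y tr mv).
have repU x y : x \in R -> x \in orbit 'P G y -> x = (g y)^-1 y.
  by case: (rep_spec y tr mv) => _ _; apply.
have gG y : g y \in G by case: (mv y).
have gN y : g y \in 'N(G) by apply: (subsetP (normG G)).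
have fN' : f^-1 \in 'N(G) by rewrite groupV.
have Req a b : a \in R -> b \in R -> a \in orbit 'P G b -> a = b.
  move=> aR bR ab; rewrite (repU _ _ aR ab); apply/esym/repU => //; exact: orbit_refl.
have key1 z x : z \in R -> x \in R -> (x \in orbit 'P G (f z)) = (z \in orbit 'P G (f^-1 x)).
  move=> zR xR; rewrite orbit_sym -(orbf (f z) x fN') permK.
  by rewrite orbit_sym.
pose p0 z := if z \in R then (g (f z))^-1 (f z) else z.
have p0_inj : injective p0.
  move=> a b; rewrite /p0; case: ifP => aR; case: ifP => bR.
  - move=> E; apply: Req => //; rewrite -(orbf a b fN).
    have h1 := repO (f a); have h2 := repO (f b); rewrite E in h1.
    apply: (orbit_trans (y := (g (f b))^-1 (f b))) => //; by rewrite orbit_sym.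
  - by move=> E; move: bR; rewrite -E repR.
  - by move=> E; move: aR; rewrite E repR.
  - by [].
pose p := perm p0_inj.
have pR z : z \in R -> p z = (g (f z))^-1 (f z) by move=> zR; rewrite permE /p0 zR.
have pRR z : z \in R -> p z \in R by move=> zR; rewrite pR.
have keyp z x : z \in R -> x \in R -> (p z = x) <-> (z = (g (f^-1 x))^-1 (f^-1 x)).
  move=> zR xR; rewrite pR //; split.
  - move=> E; apply: repU => //; rewrite -key1 // -E; exact: repO.
  - move=> E; apply/esym/repU => //; rewrite key1 // E; exact: repO.
pose q0 (v : X * {perm X}) := if v \in Gvert G R then
   (p v.1, (v.2 ^ g (f^-1 (p v.1))) ^ f) else v.
have q0V v : v \in Gvert G R -> q0 v \in Gvert G R.
  case: v => z k vV; rewrite /q0 vV.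
  have /andP [zR kC] : (z \in R) && (k \in 'C_G('C_G[z|'P])) by move: vV; rewrite inE.
  rewrite inE /= pRR //=.
  set y := f^-1 (p z).
  have e : f (g y z) = p z.
    have ez : z = (g y)^-1 y by apply/(keyp z (p z)) => //; apply: pRR.
    have e1 : g y z = y by rewrite ez permKV.
    by rewrite e1 /y permKV.
  rewrite -e; apply: (centC (b := f) (z := g y z)) => //.
  exact: (centC (b := g y) (z := z)).
have edgeE v w : Gedge G f R g v w <-> v \in Gvert G R /\ q0 v = w.
  case: v w => [z k] [x l]; rewrite /Gedge /q0 /=; split.
  - case/and4P => vV wV /eqP e1 /eqP e2; split => //; rewrite vV /=.
    have zR : z \in R by move: vV; rewrite inE => /andP [].
    have xR : x \in R by move: wV; rewrite inE => /andP [].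
    have -> : p z = x by apply/keyp.
    by rewrite e2.
  - case => vV; case: ifP => [_|]; last by move=> /negbT /negP []; exact: vV.
    move=> -[<- <-] /=.
    have zR : z \in R by move: vV; rewrite inE => /andP [].
    apply/and3P; split; [ | | by []].
    + by have := q0V _ vV; rewrite /q0 ifT.
    + by apply/eqP/(keyp z (p z)) => //; apply: pRR.
have q0_inj : injective q0.
  move=> a b; case aV: (a \in Gvert G R); case bV: (b \in Gvert G R).
  - rewrite /q0 aV bV.
    case: a aV => a1 a2 _; case: b bV => b1 b2 _ /= [/perm_inj e1].
    by rewrite e1 => /conjg_inj /conjg_inj ->.
  - by move=> E; have := q0V _ aV; rewrite E /q0 bV bV.
  - by move=> E; have := q0V _ bV; rewrite -E /q0 aV aV.
  - by rewrite /q0 aV bV.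
pose q := perm q0_inj.
have qE v : q v = q0 v by rewrite permE.
have collE z x : z \in R -> x \in R -> Gcollapsed G f R g z x <-> p z = x.
  move=> zR xR; split.
  - case=> v [w [vP wP /edgeE [vV qv]]].
    move: vP wP; rewrite !inE => /andP [_ /eqP <-] /andP [_ /eqP <-].
    by rewrite -qv /q0 vV.
  - move=> pz; exists (z, 1), (q0 (z, 1)).
    have vV : (z, 1) \in Gvert G R by rewrite inE /= zR group1.
    split; last by apply/edgeE.
    + by rewrite inE vV eqxx.
    + by rewrite inE q0V //= /q0 vV /= pz.
have v1 x : x \in R -> (x, 1) \in Gpart G R x.
  by move=> xR; rewrite inE eqxx andbT inE /= xR group1.
split.
- split.
  + apply/and3P; split.
    * apply/eqP/setP => v; apply/bigcupP/idP.
      - by case=> B /imsetP [x xR ->]; rewrite inE => /andP [].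
      - move=> vV; exists (Gpart G R v.1); last by rewrite inE vV eqxx.
        by apply: imset_f; move: vV; rewrite inE => /andP [].
    * apply/trivIsetP => A B /imsetP [x xR ->] /imsetP [x' x'R ->] neq.
      rewrite -setI_eq0; apply/eqP/setP => u; rewrite !inE.
      apply/negbTE; apply/negP => /andP [/andP [_ /eqP e1] /andP [_ /eqP e2]].
      by move: neq; rewrite -e1 -e2 eqxx.
    * apply/negP => /imsetP [x xR E].
      by have := v1 x xR; rewrite -E inE.
  + rewrite card_in_imset // => x x' xR x'R E.
    have := v1 x xR; rewrite E.
    by rewrite inE => /andP [_ /eqP].
  + have -> : [set orbit 'P G y | y : X] = [set orbit 'P G y | y in R].
      apply/setP => O; apply/imsetP/imsetP => -[y _ ->].
      * exists ((g y)^-1 y) => //; apply/esym/orbit_eqP; exact: repO.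
      * by exists y.
    rewrite card_in_imset // => x x' xR x'R E.
    apply: Req => //; rewrite -E; exact: orbit_refl.
  + move=> x xR; apply/setP => -[a k]; rewrite inE /= inE /=.
    apply/andP/imsetP.
    * by case=> /andP [aR kC] /eqP <-; exists k.
    * by case=> k' kC [-> ->]; rewrite xR kC eqxx.
- move=> x z xR zR; apply: (iff_trans (collE z x zR xR)); rewrite pR //; split.
  + move=> <-; apply/esym/orbit_eqP; exact: repO.
  + move=> E; apply/esym/repU => //; apply/orbit_eqP; by rewrite E.
- exists p; split.
  + apply/subsetP => z; rewrite inE permE /p0; by case: ifP => // _; rewrite eqxx.
  + move=> z zR; rewrite pR //; apply/orbit_eqP; exact: repO.
  + exact: collE.
- split.
  + move=> v vV; split.
    * have -> : [set w | Gedge G f R g w v] = [set q^-1 v].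
        apply/setP => w; rewrite !inE; apply/idP/eqP.
        - by case/edgeE => _ <-; rewrite -qE permK.
        - move=> ->; apply/edgeE; rewrite -qE permKV; split => //.
          have qon : perm_on (Gvert G R) q.
            apply/subsetP => u; rewrite inE qE /q0; by case: ifP => // _; rewrite eqxx.
          by rewrite -(perm_closed _ qon) permKV.
      exact: cards1.
    * have -> : [set w | Gedge G f R g v w] = [set q v].
        apply/setP => w; rewrite !inE qE; apply/idP/eqP.
        - by case/edgeE => _ <-.
        - by move=> ->; apply/edgeE.
      exact: cards1.
  + exists q; split.
    * apply/subsetP => u; rewrite inE qE /q0; by case: ifP => // _; rewrite eqxx.
    * by move=> v w; rewrite qE; apply: edgeE.
Qed.
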